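(* Let $A$ be a pca and $f:A\rightharpoonup A$ a partial function. Then the identity function $F=\mathrm{id}:A\to A[f]$ is computationally dense, and it satisfies condition (in): there are $m,c\in A$ such that $m$ witnesses computational density of $F$ and for every $b\in A$, $c\cdot^f b$ is defined and $m\cdot^f(c\cdot^f b)=b$.
   Context: A pca is a set $A$ with a partial binary application admitting $K,S$ with $Kab=a$, $Sab{\downarrow}$, $Sabc\simeq ac(bc)$. Each pca has fixed Booleans $\top,\bot$, pairing $p$ with projections $p_0,p_1$ ($p_0(pab)=a$, $p_1(pab)=b$), and a coding $[u_0,\dots,u_{n-1}]$ of finite sequences with concatenation $\ast$. For partial $f:A\rightharpoonup A$, the pca $A[f]$ has underlying set $A$ and application $\cdot^f$: an $f$-dialogue between $a,b$ is a code $u=[u_0,\dots,u_{n-1}]$ such that for each $i<n$ there is $v_i$ with $a\cdot([b]\ast[u_0,\dots,u_{i-1}])=p\bot v_i$ and $f(v_i)$ defined and equal to $u_i$; and $a\cdot^f b=c$ iff there is an $f$-dialogue $u$ between $a,b$ with $a\cdot([b]\ast u)=p\top c$. The map $a\mapsto\{a\}$ is an applicative morphism $A\to A[f]$. For pcas $A,B$ and a function $F:A\to B$ such that $a\mapsto\{F(a)\}$ is an applicative morphism, $F$ is computationally dense if there is $m\in B$ such that for every $b\in B$ there is $a\in A$ such that for all $a'\in A$: if $bF(a'){\downarrow}$ in $B$, then $aa'{\downarrow}$ in $A$ and $mF(aa')=bF(a')$ in $B$. Condition (in) (for such $F$ and $m$): there is $c\in B$ such that for every $b\in B$ there is $a\in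 A$ with $cb=F(a)$ and $m(cb)=b$. *)

(* Defs.v *)
From Stdlib Require Import List.
Import ListNotations.
Set Implicit Arguments.

Definition app_opt {A : Type} (app : A -> A -> option A)
  (x y : option A) : option A :=
  match x, y with
  | Some a, Some b => app a b
  | _, _ => None
  end.

(* K1 a, S1 a, S2 a b are the (necessarily unique) values of K a, S a, S a b,
   whose definedness is part of the pca axioms; naming them is harmless. *)
Record pca := {
  car :> Type;
  app : car -> car -> option car;
  K : car;
  S : car;
  K1 : car -> car;
  S1 : car -> car;
  S2 : car -> car -> car;
  K1_spec : forall a, app K a = Some (K1 a);
  K_spec : forall a b, app (K1 a) b = Some a;
  S1_spec : forall a, app S a = Some (S1 a);
  S2_spec : forall a b, app (S1 a) b = Some (S2 a b);
  S_spec : forall a b c,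
    app (S2 a b) c = app_opt app (app a c) (app b c)
}.

Section Combinators.
Variable A : pca.

Definition I_ : A := S2 A (K A) (K A).
Definition top : A := K A.
Definition bot : A := K1 A I_.
(* Pairing: p a b = \z. z a b = S (S I (K a)) (K b) *)
Definition pair (a b : A) : A := S2 A (S2 A I_ (K1 A a)) (K1 A b).
(* Coding of finite sequences: [] = p top top, [u0,...] = p bot (p u0 [...]).
   With this coding, [b] * [u0,...,u_{n-1}] = code (b :: u0 :: ... :: u_{n-1}). *)
Fixpoint code (l : list A) : A :=
  match l with
  | [] => pair top top
  | u :: l' => pair bot (pair u (code l'))
  end.

Variable f : A -> option A.

Definition dialogue (a b : A) (u : list A) : Prop :=
  forall i, i < length u ->
    exists v, app A a (code (b :: firstn i u)) = Some (pair bot v)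
              /\ f v = Some (nth i u (K A)).

Definition appf (a b c : A) : Prop :=
  exists u, dialogue a b u /\ app A a (code (b :: u)) = Some (pair top c).
End Combinators.

(* Partial applicative structures given by an application relation
   (papp x y z  means  x y = z). *)
Record PAS := { pcar :> Type; papp : pcar -> pcar -> pcar -> Prop }.

Definition PAS_of (A : pca) : PAS := {| pcar := car A; papp := fun x y z => app A x y = Some z |}.
Definition PAS_rel (A : pca) (f : A -> option A) : PAS :=
  {| pcar := car A; papp := @appf A f |}.

Definition pdefined (B : PAS) (x y : B) : Prop := exists z, papp B x y z.

(* a |-> {F a} is an applicative morphism: there is a realizer r in B with
   r F(a) F(a') defined and equal to F(a a') whenever a a' is defined. *)
Definition singleton_applicative_morphism (A B : PAS) (F : A -> B) : Prop :=
  exists r : B, forall a a' x, papp A a a' x ->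
    exists r1, papp B r (F a) r1 /\ papp B r1 (F a') (F x).

Definition comp_dense_witness (A B : PAS) (F : A -> B) (m : B) : Prop :=
  forall b : B, exists a : A, forall a' : A,
    @pdefined B b (F a') ->
    exists aa', papp A a a' aa' /\
      forall y, papp B b (F a') y -> papp B m (F aa') y.

Definition computationally_dense (A B : PAS) (F : A -> B) : Prop :=
  @singleton_applicative_morphism A B F /\ exists m, @comp_dense_witness A B F m.

Definition cond_in (A B : PAS) (F : A -> B) (m : B) : Prop :=
  exists c : B, forall b : B, exists a : A, papp B c b (F a) /\ papp B m (F a) b.

(* Main.v *)
Require Import Defs.
From Stdlib Require Import List Arith.
Import ListNotations.
Import Defs.
Arguments pair {A} a b.
Arguments code {A} l.

Section Machinery.
Variable A : pca.

Inductive tm := Var (n : nat) | Cst (a : A) | Ap (t1 t2 : tm).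

Fixpoint eval (rho : nat -> A) (t : tm) : option A :=
  match t with
  | Var n => Some (rho n)
  | Cst a => Some a
  | Ap t1 t2 => app_opt (Defs.app A) (eval rho t1) (eval rho t2)
  end.

Definition upd (rho : nat -> A) (n : nat) (x : A) : nat -> A :=
  fun m => if Nat.eqb m n then x else rho m.

Fixpoint abs (n : nat) (t : tm) : tm :=
  match t with
  | Var m => if Nat.eqb m n then Cst (I_ A) else Ap (Cst (K A)) (Var m)
  | Cst a => Cst (K1 A a)
  | Ap t1 t2 => Ap (Ap (Cst (S A)) (abs n t1)) (abs n t2)
  end.

Lemma I_spec x : Defs.app A (I_ A) x = Some x.
Proof. unfold I_. rewrite S_spec, K1_spec; simpl. apply K_spec. Qed.

Lemma abs_spec n t rho : exists v, eval rho (abs n t) = Some v /\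
  forall x, Defs.app A v x = eval (upd rho n x) t.
Proof.
  induction t as [m|a|t1 IH1 t2 IH2]; simpl.
  - unfold upd. destruct (Nat.eqb m n).
    + exists (I_ A). split; [reflexivity|]. intro; apply I_spec.
    + exists (K1 A (rho m)). split; [apply K1_spec|]. intro; apply K_spec.
  - exists (K1 A a). split; [reflexivity|]. intro; apply K_spec.
  - destruct IH1 as [v1 [E1 H1]], IH2 as [v2 [E2 H2]].
    exists (S2 A v1 v2). rewrite E1, E2. simpl. rewrite S1_spec. simpl.
    rewrite S2_spec. split; [reflexivity|]. intro x. rewrite S_spec, H1, H2. reflexivity.
Qed.

Lemma app_pair a b z : Defs.app A (pair a b) z =
  match Defs.app A z a with Some w => Defs.app A w b | None => None end.
Proof.
  unfold pair. rewrite S_spec, S_spec, I_spec, K_spec, K_spec. simpl.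
  destruct (Defs.app A z a); reflexivity.
Qed.

Lemma pair_K a b : Defs.app A (pair a b) (K A) = Some a.
Proof. rewrite app_pair, K1_spec. apply K_spec. Qed.

Lemma pair_bot a b : Defs.app A (pair a b) (bot A) = Some b.
Proof. rewrite app_pair. unfold bot. rewrite K_spec. apply I_spec. Qed.

Definition Pr (t1 t2 : tm) : tm :=
  Ap (Ap (Cst (S A)) (Ap (Ap (Cst (S A)) (Cst (I_ A))) (Ap (Cst (K A)) t1)))
     (Ap (Cst (K A)) t2).

Lemma eval_Pr rho t1 t2 x y : eval rho t1 = Some x -> eval rho t2 = Some y ->
  eval rho (Pr t1 t2) = Some (pair x y).
Proof.
  intros H1 H2. simpl. rewrite H1, H2.
  repeat (simpl; first [rewrite S1_spec | rewrite S2_spec | rewrite K1_spec]).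
  reflexivity.
Qed.

Definition hd (t : tm) : tm := Ap (Ap t (Cst (bot A))) (Cst (K A)).
Definition tl (t : tm) : tm := Ap (Ap t (Cst (bot A))) (Cst (bot A)).
Definition fstt (t : tm) : tm := Ap t (Cst (K A)).
Definition sndt (t : tm) : tm := Ap t (Cst (bot A)).

Lemma eval_hd rho t b l : eval rho t = Some (code (b :: l)) ->
  eval rho (hd t) = Some b.
Proof. intro H. simpl. rewrite H. simpl. rewrite pair_bot. simpl. apply pair_K. Qed.

Lemma eval_tl rho t b l : eval rho t = Some (code (b :: l)) ->
  eval rho (tl t) = Some (code l).
Proof. intro H. simpl. rewrite H. simpl. rewrite pair_bot. simpl. apply pair_bot. Qed.

Lemma eval_fst rho t a b : eval rho t = Some (pair a b) -> eval rho (fstt t) = Some a.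
Proof. intro H. simpl. rewrite H. simpl. apply pair_K. Qed.

Lemma eval_snd rho t a b : eval rho t = Some (pair a b) -> eval rho (sndt t) = Some b.
Proof. intro H. simpl. rewrite H. simpl. apply pair_bot. Qed.

End Machinery.

Arguments Var {A}. Arguments Cst {A}. Arguments Ap {A}.

Lemma eval_Ap (A : pca) rho (t1 t2 : tm A) :
  eval A rho (Ap t1 t2) = app_opt (Defs.app A) (eval A rho t1) (eval A rho t2).
Proof. reflexivity. Qed.

Theorem mainTheorem9 (A : pca) (f : A -> option A) :
  @singleton_applicative_morphism (PAS_of A) (@PAS_rel A f) (fun a => a) /\
  exists m : A,
    @comp_dense_witness (PAS_of A) (@PAS_rel A f) (fun a => a) m /\
    @cond_in (PAS_of A) (@PAS_rel A f) (fun a => a) m.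
Proof.
  set (rho0 := fun _ : nat => K A).
  split.
  -
    set (T1 := Pr A (Cst (top A)) (Ap (Var 1) (hd A (Var 0)))).
    set (T0 := Ap (abs A 1 (Pr A (Cst (top A)) (abs A 0 T1))) (hd A (Var 2))).
    destruct (abs_spec A 2 T0 rho0) as [r [_ Hr]].
    exists r. intros a a' x Hx. cbn [pcar papp PAS_of PAS_rel] in a, a', x, Hx |- *.
    destruct (abs_spec A 1 (Pr A (Cst (top A)) (abs A 0 T1)) (upd A rho0 2 (code [a])))
      as [w [Ew Hw]].
    destruct (abs_spec A 0 T1 (upd A (upd A rho0 2 (code [a])) 1 a)) as [v [Ev Hv]].
    exists v. split.
    + exists []. split.
      * intros i Hi. simpl in Hi. exfalso. inversion Hi.
      * rewrite Hr. unfold T0. rewrite eval_Ap. rewrite Ew.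
        rewrite (eval_hd A _ _ a []) by reflexivity. cbn [app_opt]. rewrite Hw.
        apply eval_Pr; [reflexivity|]. exact Ev.
    + exists []. split.
      * intros i Hi. simpl in Hi. exfalso. inversion Hi.
      * rewrite Hv. unfold T1. apply eval_Pr; [reflexivity|].
        rewrite eval_Ap, (eval_hd A _ _ a' []) by reflexivity.
        cbn [eval app_opt upd Nat.eqb]. exact Hx.
  - set (body := Ap (fstt A (hd A (Var 0)))
        (Pr A (Cst (bot A)) (Pr A (sndt A (hd A (Var 0))) (tl A (Var 0))))).
    destruct (abs_spec A 0 body rho0) as [m [_ Hm]].
    assert (Key : forall b a' l, Defs.app A m (code (pair b a' :: l)) = Defs.app A b (code (a' :: l))).
    { intros b a' l. rewrite Hm. unfold body. rewrite eval_Ap.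
      rewrite (eval_fst A _ _ b a') by (apply (eval_hd A _ _ _ l); reflexivity).
      rewrite (eval_Pr A _ _ _ (bot A) (pair a' (code l))); [reflexivity|reflexivity|].
      apply eval_Pr.
      - apply (eval_snd A _ _ b). apply (eval_hd A _ _ _ l). reflexivity.
      - apply (eval_tl A _ _ (pair b a')). reflexivity. }
    exists m. split.
    + intros b. cbn [pcar PAS_of PAS_rel] in b.
      destruct (abs_spec A 0 (Pr A (Cst b) (Var 0)) rho0) as [a [_ Ha]].
      exists a. intros a' _. exists (pair b a'). split.
      * cbn [papp PAS_of]. rewrite Ha. apply eval_Pr; reflexivity.
      * intros y [u [Hd Hf]]. exists u. split.
        -- intros i Hi. destruct (Hd i Hi) as [v [Hv1 Hv2]]. exists v. split; [|exact Hv2].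
           rewrite Key. exact Hv1.
        -- rewrite Key. exact Hf.
    + destruct (abs_spec A 0 (Pr A (Cst (top A)) (hd A (Var 0))) rho0) as [E [_ HE]].
      destruct (abs_spec A 0 (Pr A (Cst (top A)) (Pr A (Cst E) (hd A (Var 0)))) rho0)
        as [c [_ Hc]].
      exists c. intro b. exists (pair E b). split.
      * exists []. split.
        -- intros i Hi. simpl in Hi. exfalso. inversion Hi.
        -- rewrite Hc. apply eval_Pr; [reflexivity|]. apply eval_Pr; [reflexivity|].
           apply (eval_hd A _ _ _ []). reflexivity.
      * exists []. split.
        -- intros i Hi. simpl in Hi. exfalso. inversion Hi.
        -- rewrite Key, HE. apply eval_Pr; [reflexivity|].
           apply (eval_hd A _ _ _ []). reflexivity.
Qed.
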